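(* Consider Algorithm MWHVC (described in the context) run in the CONGEST model on a hypergraph $G=(V,E)$ of rank $f$ and maximum degree $\Delta\ge 3$ with nonnegative vertex weights $w$, with parameters $\varepsilon\in(0,1]$, $\beta=\varepsilon/(f+\varepsilon)$ and multiplier $\alpha=\log\Delta/\log\log\Delta$. Then the round complexity of the algorithm is $O\left(\frac{f^2}{\varepsilon}\cdot\frac{\log\Delta}{\log\log\Delta}\right)$.
   Context: Let $G=(V,E)$ be a hypergraph with $n=|V|$: each hyperedge is a nonempty subset of $V$ of size at most $f$ (rank $f$). Vertices have nonnegative weights $w(v)$; weights and degrees are assumed polynomial in $n$. For $v\in V$, $E(v)=\{e\in E: v\in e\}$; $\Delta=\max_v |E(v)|\ge 3$. A hyperedge $e$ is covered by $C\subseteq V$ if $e\cap C\neq\emptyset$. The computation is distributed in synchronous rounds (CONGEST: messages of $O(\log n)$ bits) on the bipartite network with node set $V\cup E$ and a link between $v$ and $e$ iff $v\in e$. Parameters: $\varepsilon\in(0,1]$, $\beta=\varepsilon/(f+\varepsilon)$, and a multiplier $\alpha>1$. Algorithm MWHVC: Initialize $C\gets\emptyset$ and $E'(v)\gets E(v)$ for every $v$. Iteration $0$: every hyperedge $e$ sets $\mathrm{deal}_0(e)=\beta\cdot\min_{v\in e} w(v)/|E(v)|$ and $\delta_0(e)=\mathrm{deal}_0(e)$. For $i=1,2,\dots$: (a) every vertex $v\notin C$ (not terminated) checks whether $\sum_{e\in E(v)}\delta_{i-1}(e)\ge(1-\beta)w(v)$; if so, $v$ joins $C$, tells every $e\in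 E'(v)$ that $e$ is covered, and terminates. (b) Every uncovered hyperedge that receives such a message becomes covered, informs all its vertices, and terminates. (c) Every vertex $v\notin C$ that is told $e$ is covered sets $E'(v)\gets E'(v)\setminus\{e\}$; if $E'(v)=\emptyset$, $v$ terminates without joining $C$. (d) Every vertex $v\notin C$ sends ''raise'' to all $e\in E'(v)$ if $\sum_{e\in E'(v)}\mathrm{deal}_{i-1}(e)\le(\beta/\alpha)w(v)$, and otherwise sends ''stuck'' to all $e\in E'(v)$. (e) Every uncovered hyperedge $e$ sets $\mathrm{deal}_i(e)=\mathrm{deal}_{i-1}(e)$ if it received some ''stuck'' message, and $\mathrm{deal}_i(e)=\alpha\cdot\mathrm{deal}_{i-1}(e)$ otherwise, and $\delta_i(e)=\delta_{i-1}(e)+\mathrm{deal}_i(e)$, sending the new deal to its vertices. A vertex terminates when it is in $C$ or all its hyperedges are covered; a hyperedge terminates when covered. *)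

(* Defs.v *)
From HB Require Import structures.
From mathcomp Require Import all_boot all_order all_algebra.
From mathcomp Require Import reals exp.
Set Implicit Arguments. Unset Strict Implicit. Unset Printing Implicit Defensive.
Import Order.TTheory GRing.Theory Num.Theory.
Local Open Scope ring_scope.

Section MWHVC.
Variables (R : realType) (V : finType).
Variable E : {set {set V}}.
Variable w : V -> R.
Variables (beta alpha : R).

Definition Ev (v : V) : {set {set V}} := [set e in E | v \in e].

Definition maxdeg : nat := \max_(v : V) #|Ev v|.

Definition minover (A : {set V}) (F : V -> R) : R :=
  match [pick v in A] with
  | Some v0 => \big[Num.min/F v0]_(v in A) F v
  | None => 0
  end.

Record state := State {
  inC   : {set V};
  cov   : {set {set V}};      (* covered (hence terminated) hyperedges *)
  Ep    : V -> {set {set V}};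
  deal  : {set V} -> R;
  delta : {set V} -> R }.

Definition alive (s : state) (v : V) : bool := (v \notin inC s) && (Ep s v != set0).

Definition deal0 (e : {set V}) : R :=
  if e \in E then beta * minover e (fun v => w v / (#|Ev v|)%:R) else 0.

Definition state0 : state := State set0 set0 Ev deal0 deal0.

Definition step (s : state) : state :=
  let joinA := [set v | alive s v &&
                  ((1 - beta) * w v <= \sum_(e in Ev v) delta s e)] in
  let C' := inC s :|: joinA in
  let newcov := [set e in E | (e \notin cov s) &&
                  [exists v, (v \in joinA) && (e \in Ep s v)]] in
  let cov' := cov s :|: newcov in
  let Ep' := fun v => if v \in C' then Ep s v else Ep s v :\: newcov in
  let s' := State C' cov' Ep' (deal s) (delta s) in
  let raise := fun v => \sum_(e in Ep' v) deal s e <= beta / alpha * w v in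
  let stuckmsg := fun e => [exists v, [&& alive s' v, e \in Ep' v & ~~ raise v]] in
  let deal' := fun e => if (e \in E) && (e \notin cov') then
                 (if stuckmsg e then deal s e else alpha * deal s e)
               else deal s e in
  let delta' := fun e => if (e \in E) && (e \notin cov') then
                 delta s e + deal' e else delta s e in
  State C' cov' Ep' deal' delta'.

Fixpoint stateAt (i : nat) : state :=
  if i is i'.+1 then step (stateAt i') else state0.

Definition finished (s : state) : bool :=
  [forall e in E, e \in cov s] && [forall v, ~~ alive s v].

(* number of CONGEST rounds used by iterations 0..T: iteration 0 takes
   at most 2 rounds (vertices send w(v)/|E(v)|, edges send deal_0), and each
   later iteration takes at most 4 rounds (steps (a),(b),(d),(e)). *)
Definition rounds (T : nat) : nat := 4 * T + 2.

End MWHVC.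

(* Main.v *)
Require Import Defs.
From HB Require Import structures.
From mathcomp Require Import all_boot all_order all_algebra.
From mathcomp Require Import reals exp.
From mathcomp Require Import sequences.
From mathcomp Require Import ring lra.
Import Order.TTheory GRing.Theory Num.Theory.
Set Implicit Arguments. Unset Strict Implicit. Unset Printing Implicit Defensive.
Local Open Scope ring_scope.

Section Algo.
Variables (R : realType) (V : finType) (E : {set {set V}}) (w : V -> R) (beta alpha : R).
Hypotheses (hw : forall v, 0 <= w v) (hb0 : 0 < beta) (hb1 : beta < 1) (ha : 1 < alpha).
Hypothesis hE : forall e, e \in E -> e != set0.

Notation st := (state R V).
Notation stp := (step E w beta alpha).
Notation S i := (stateAt E w beta alpha i).

Definition joinA (s : st) := [set v | alive s v && ((1 - beta) * w v <= \sum_(e in Ev E v) delta s e)].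
Definition newcov (s : st) := [set e in E | (e \notin cov s) && [exists v, (v \in joinA s) && (e \in Ep s v)]].
Definition uncov (s : st) e := (e \in E) && (e \notin cov s).
Definition raiseb (s s' : st) v := \sum_(e in Ep s' v) deal s e <= beta / alpha * w v.

Lemma inC_S s : inC (stp s) = inC s :|: joinA s. Proof. by []. Qed.
Lemma cov_S s : cov (stp s) = cov s :|: newcov s. Proof. by []. Qed.
Lemma Ep_S s v : Ep (stp s) v = if v \in inC (stp s) then Ep s v else Ep s v :\: newcov s.
Proof. by []. Qed.
Lemma deal_S s e : deal (stp s) e = if uncov (stp s) e then
   (if [exists v, [&& alive (stp s) v, e \in Ep (stp s) v & ~~ raiseb s (stp s) v]]
    then deal s e else alpha * deal s e) else deal s e.
Proof. by []. Qed.
Lemma delta_S s e : delta (stp s) e = if uncov (stp s) e then delta s e + deal (stp s) e else delta s e.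
Proof. by []. Qed.

Lemma minover_attain (A : {set V}) (F : V -> R) : A != set0 -> exists2 u, u \in A & minover A F = F u.
Proof.
move=> /set0Pn [x xA]; rewrite /minover.
case: pickP => [v0 v0A|]; last by move=> /(_ x); rewrite xA.
apply: (big_ind (fun y => exists2 u, u \in A & y = F u)) => //.
- by exists v0.
- move=> y z [u uA ->] [u' u'A ->].
  by case: (leP (F u) (F u')) => _; [exists u | exists u'].
- by move=> i iA; exists i.
Qed.

Lemma minover_ge0 (A : {set V}) (F : V -> R) : (forall v, 0 <= F v) -> 0 <= minover A F.
Proof.
move=> hF; rewrite /minover; case: pickP => // v0 _.
by apply: (big_ind (fun y => 0 <= y)) => // y z hy hz; rewrite le_min hy hz.
Qed.

Lemma deal0_ge0 e : 0 <= deal0 E w beta e.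
Proof.
rewrite /deal0; case: ifP => // _; apply: mulr_ge0; first exact: ltW.
by apply: minover_ge0 => v; apply: divr_ge0.
Qed.

Definition Inv (s : st) :=
  [/\ forall v, v \notin inC s -> Ep s v = Ev E v :\: cov s,
      forall v, v \in inC s -> Ev E v \subset cov s,
      cov s \subset E,
      forall e, 0 <= deal s e & forall e, 0 <= delta s e].

Lemma Inv0 : Inv (S 0).
Proof.
split => //=; first by move=> v _; rewrite setD0.
- by move=> v; rewrite inE.
- exact: sub0set.
- exact: deal0_ge0.
- exact: deal0_ge0.
Qed.

Lemma InvS s : Inv s -> Inv (stp s).
Proof.
case=> h1 h2 h3 h4 h5; split.
- move=> v; rewrite inC_S inE negb_or => /andP [vC vJ].
  by rewrite Ep_S inC_S inE (negbTE vC) (negbTE vJ) /= h1 // setDDl.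
- move=> v; rewrite inC_S inE => /orP [vC|vJ].
    by rewrite cov_S; apply: subset_trans (h2 v vC) (subsetUl _ _).
  apply/subsetP => e eEv; rewrite cov_S inE.
  case ec: (e \in cov s) => //=.
  have vC : v \notin inC s by move: vJ; rewrite inE => /andP [/andP [] ].
  have eE : e \in E by move: eEv; rewrite inE => /andP [].
  rewrite inE eE ec /=; apply/existsP; exists v; rewrite vJ /= h1 //.
  by rewrite inE ec.
- rewrite cov_S subUset h3 /=; apply/subsetP => e; rewrite inE => /andP [] //.
- move=> e; rewrite deal_S; case: ifP => // _; case: ifP => // _.
  by apply: mulr_ge0 => //; apply: ltW; apply: lt_trans ha.
- move=> e; rewrite delta_S; case: ifP => // _; apply: addr_ge0 => //.
  rewrite deal_S; case: ifP => // _; case: ifP => // _.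
  by apply: mulr_ge0 => //; apply: ltW; apply: lt_trans ha.
Qed.

Lemma InvN n : Inv (S n).
Proof. elim: n => [|n IH]; [exact: Inv0 | exact: InvS]. Qed.

Lemma deal_mono s e : Inv s -> deal s e <= deal (stp s) e.
Proof.
case=> _ _ _ h4 _; rewrite deal_S; case: ifP => // _; case: ifP => // _.
by apply: ler_peMl => //; apply: ltW.
Qed.

Lemma delta_mono s e : Inv s -> delta s e <= delta (stp s) e.
Proof.
move=> hI; have [_ _ _ h4 _] := InvS hI.
by rewrite delta_S; case: ifP => // _; rewrite lerDl.
Qed.

Lemma uncov_prev s e : uncov (stp s) e -> uncov s e.
Proof. by rewrite /uncov cov_S inE negb_or => /andP [-> /andP []]. Qed.

Lemma uncov_mono i j e : (i <= j)%N -> uncov (S j) e -> uncov (S i) e.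
Proof.
elim: j => [|j IH]; first by rewrite leqn0 => /eqP ->.
rewrite leq_eqVlt => /orP [/eqP -> //|]; rewrite ltnS => hij h.
by apply: IH => //; apply: uncov_prev.
Qed.

Lemma uncov_alive s e u : Inv s -> uncov s e -> u \in e -> alive s u && (e \in Ep s u).
Proof.
case=> h1 h2 _ _ _ /andP [eE ec] ue.
have eEv : e \in Ev E u by rewrite inE eE ue.
have uC : u \notin inC s.
  by apply/negP => /h2 /subsetP /(_ _ eEv); rewrite (negbTE ec).
have eEp : e \in Ep s u by rewrite h1 // inE ec.
rewrite /alive uC eEp andbT /=; apply/set0Pn; by exists e.
Qed.

Lemma J s e u : Inv s -> uncov (stp s) e -> u \in e ->
  \sum_(e' in Ev E u) delta s e' < (1 - beta) * w u.
Proof.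
move=> hI hu ue; have hu' := uncov_prev hu.
have /andP [al eEp] := uncov_alive hI hu' ue.
rewrite ltNge; apply/negP => hle.
move: hu; rewrite /uncov cov_S inE negb_or => /andP [_ /andP [_]].
rewrite inE; move: hu' => /andP [-> ->] /=; apply/negP; rewrite negbK.
by apply/existsP; exists u; rewrite eEp andbT inE al hle.
Qed.

Lemma sum_delta_ge0 s v : Inv s -> 0 <= \sum_(e' in Ev E v) delta s e'.
Proof. by case=> _ _ _ _ h5; apply: sumr_ge0 => e _; apply: h5. Qed.

Lemma wpos s e u : Inv s -> uncov (stp s) e -> u \in e -> 0 < w u.
Proof.
move=> hI hu ue; have := J hI hu ue.
have := sum_delta_ge0 u hI => h0 h1.
have : 0 < (1 - beta) * w u by apply: le_lt_trans h1.
by rewrite pmulr_rgt0 // subr_gt0.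
Qed.


Definition stuckAt i v := alive (S i.+1) v && ~~ raiseb (S i) (S i.+1) v.
Definition sc v n := (\sum_(0 <= i < n) stuckAt i v)%N.

Lemma alive_Ep s v : Inv s -> alive s v -> Ep s v = Ev E v :\: cov s.
Proof. by case=> h1 _ _ _ _ /andP [vC _]; apply: h1. Qed.

Lemma sc_delta n v : (sc v n)%:R * (beta / alpha * w v) <= \sum_(e in Ev E v) delta (S n) e.
Proof.
elim: n => [|n IH]; first by rewrite /sc big_geq // mul0r; apply: sum_delta_ge0; apply: InvN.
have -> : sc v n.+1 = (sc v n + stuckAt n v)%N by rewrite /sc big_nat_recr.
rewrite natrD mulrDl.
have hI := InvN n; have hI' := InvN n.+1.
have mono : \sum_(e in Ev E v) delta (S n) e <= \sum_(e in Ev E v) delta (S n.+1) e.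
  by apply: ler_sum => e _; apply: delta_mono.
case st: (stuckAt n v); last by rewrite /= mul0r addr0; apply: le_trans mono.
rewrite mul1r.
move: st => /andP [al nr]; move: nr; rewrite /raiseb -ltNge => nr.
have EpE := alive_Ep hI' al.
have key : \sum_(e in Ev E v) delta (S n.+1) e >=
   \sum_(e in Ev E v) (delta (S n) e + (if e \in Ep (S n.+1) v then deal (S n) e else 0)).
  apply: ler_sum => e eEv; case: ifP => eEp; last by rewrite addr0; apply: delta_mono.
  have hu : uncov (S n.+1) e.
    by move: eEp; rewrite EpE inE => /andP [ec]; rewrite inE => /andP [eE _]; rewrite /uncov eE ec.
  rewrite [delta (S n.+1) e]delta_S hu lerD2l; exact: deal_mono.
apply: le_trans key; rewrite big_split /=.
have -> : \sum_(e in Ev E v) (if e \in Ep (S n.+1) v then deal (S n) e else 0) = \sum_(e in Ep (S n.+1) v) deal (S n) e.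
  rewrite -big_mkcondr; apply: eq_bigl => e; rewrite EpE !inE.
  by case: (e \in E); case: (v \in e); rewrite ?andbT ?andbF.
apply: lerD => //; exact: ltW.
Qed.

Lemma stuck_ctx n v : stuckAt n v -> \sum_(e in Ev E v) delta (S n) e < (1 - beta) * w v.
Proof.
move=> /andP [/andP [vC nE] _].
move: vC; rewrite [inC _]inC_S inE negb_or => /andP [vC vJ].
move: nE; rewrite [Ep _ _]Ep_S [inC _]inC_S inE (negbTE vC) (negbTE vJ) /= => nE.
have al : alive (S n) v.
  rewrite /alive vC /=; apply: contra nE => /eqP ->; by rewrite set0D.
by move: vJ; rewrite inE al /= -ltNge.
Qed.

Definition SB := (1 - beta) / (beta / alpha) + 1.

Lemma sc_bound n v : (sc v n)%:R <= SB.
Proof.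
have a0 : 0 < alpha by apply: lt_trans ha.
have ba : 0 < beta / alpha by apply: divr_gt0.
have b1 : 0 < 1 - beta by rewrite subr_gt0.
elim: n => [|n IH].
  rewrite /sc big_geq // /SB; apply: addr_ge0 => //; apply: divr_ge0; exact: ltW.
have -> : sc v n.+1 = (sc v n + stuckAt n v)%N by rewrite /sc big_nat_recr.
rewrite natrD.
case st: (stuckAt n v); last by rewrite addr0.
have h1 := sc_delta n v; have h2 := stuck_ctx st.
have h3 : (sc v n)%:R * (beta / alpha * w v) < (1 - beta) * w v := le_lt_trans h1 h2.
have wp : 0 < w v.
  have : 0 < (1 - beta) * w v.
    apply: le_lt_trans h3; apply: mulr_ge0 => //; apply: mulr_ge0 => //; exact: ltW.
  by rewrite pmulr_rgt0.
rewrite mulrA ltr_pM2r // -ltr_pdivlMr // in h3.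
by rewrite /SB lerD2r ltW.
Qed.

Definition raisedAt i e := uncov (S i.+1) e &&
   ~~ [exists v, [&& alive (S i.+1) v, e \in Ep (S i.+1) v & ~~ raiseb (S i) (S i.+1) v]].
Lemma deal_SN n e : deal (S n.+1) e = if uncov (S n.+1) e then
   (if [exists v, [&& alive (S n.+1) v, e \in Ep (S n.+1) v & ~~ raiseb (S n) (S n.+1) v]]
    then deal (S n) e else alpha * deal (S n) e) else deal (S n) e.
Proof. by []. Qed.

Definition rc e n := (\sum_(0 <= i < n) raisedAt i e)%N.

Lemma deal_rc n e : deal (S n) e = alpha ^+ (rc e n) * deal0 E w beta e.
Proof.
elim: n => [|n IH]; first by rewrite /rc big_geq //; apply: esym; apply: mul1r.
have -> : rc e n.+1 = (rc e n + raisedAt n e)%N by rewrite /rc big_nat_recr.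
rewrite deal_SN exprD /raisedAt.
case: (uncov (S n.+1) e) => /=; first case: ifP => _ /=.
- by rewrite IH; apply: congr2 => //; apply: esym; apply: mulr1.
- by rewrite IH mulrA [alpha * _]mulrC.
- by rewrite IH; apply: congr2 => //; apply: esym; apply: mulr1.
Qed.


Lemma deg_le u : (#|Ev E u| <= maxdeg E)%N.
Proof. rewrite /maxdeg. exact: (@leq_bigmax _ (fun v => #|Ev E v|) u). Qed.

Lemma rc_bound n e : e \in E -> alpha ^+ (rc e n) <= (maxdeg E)%:R.
Proof.
move=> eE; have a0 : 0 < alpha by apply: lt_trans ha.
elim: n => [|n IH].
  rewrite /rc big_geq // expr0 ler1n.
  have /set0Pn [u ue] := hE eE.
  apply: leq_trans (deg_le u); rewrite card_gt0; apply/set0Pn; exists e; by rewrite inE eE ue.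
have -> : rc e n.+1 = (rc e n + raisedAt n e)%N by rewrite /rc big_nat_recr.
case r: (raisedAt n e); first last; first by rewrite addn0.
move: r => /andP [hu notex].
have [u ue hmin] := minover_attain (fun v => w v / (#|Ev E v|)%:R) (hE eE).
have /andP [al eEp] := uncov_alive (InvN n.+1) hu ue.
have hr : raiseb (S n) (S n.+1) u.
  apply/negPn; apply: contra notex => nr; apply/existsP; exists u; by rewrite al eEp nr.
have wp : 0 < w u := wpos (InvN n) hu ue.
have eEv : e \in Ev E u by rewrite inE eE ue.
have dpos : (0 < #|Ev E u|)%N by rewrite card_gt0; apply/set0Pn; exists e.
set d := (#|Ev E u|)%:R : R.
have dp : 0 < d by rewrite ltr0n.
have h1 : deal (S n) e <= beta / alpha * w u.
  apply: le_trans hr; rewrite /raiseb (bigD1 e) //= lerDl.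
  by apply: sumr_ge0 => i _; case: (InvN n) => _ _ _ h4 _; apply: h4.
rewrite deal_rc /deal0 eE hmin -/d in h1.
set x := alpha ^+ rc e n in h1 *.
have bw : 0 < beta * w u by apply: mulr_gt0.
have h2 : (beta * w u) * (x * alpha) <= (beta * w u) * d.
  have -> : (beta * w u) * (x * alpha) = x * (beta * (w u / d)) * (d * alpha).
    by field; rewrite gt_eqF.
  have -> : (beta * w u) * d = beta / alpha * w u * (d * alpha).
    by field; rewrite gt_eqF.
  by apply: ler_wpM2r => //; apply: mulr_ge0; apply: ltW.
rewrite ler_pM2l // in h2.
rewrite addn1 exprS mulrC; apply: le_trans h2 _; rewrite ler_nat; exact: deg_le.
Qed.

Lemma uncov_split n e : uncov (S n.+1) e -> (1 <= raisedAt n e + \sum_(u in e) stuckAt n u)%N.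
Proof.
move=> hu; case r: (raisedAt n e) => //.
move: r; rewrite /raisedAt hu andTb => /negbFE /existsP [v /and3P [al eEp nr]].
have EpE := alive_Ep (InvN n.+1) al.
have ve : v \in e by move: eEp; rewrite EpE !inE => /andP [_ /andP []].
by rewrite add0n (bigD1 v) //= /stuckAt al nr.
Qed.

Lemma life n e : uncov (S n) e -> (n <= rc e n + \sum_(u in e) sc u n)%N.
Proof.
move=> hu.
have -> : (rc e n + \sum_(u in e) sc u n = \sum_(0 <= i < n) (raisedAt i e + \sum_(u in e) stuckAt i u))%N.
  by rewrite /rc /sc big_split /= exchange_big.
rewrite -{1}[n]subn0 -[(n - 0)%N]muln1 -sum_nat_const_nat big_nat [X in (_ <= X)%N]big_nat.
apply: leq_sum => i /andP [_ lin]; apply: uncov_split; exact: uncov_mono hu.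
Qed.

Lemma finished_of n : (forall e, e \in E -> e \in cov (S n)) -> finished E (S n).
Proof.
move=> H; rewrite /finished; apply/andP; split.
  by apply/forallP => e; apply/implyP => /H.
apply/forallP => v; rewrite /alive negb_and negbK.
case vC: (v \in inC _) => //=.
case: (InvN n) => h1 _ _ _ _; rewrite h1 ?vC // negbK setD_eq0.
by apply/subsetP => e; rewrite inE => /andP [/H].
Qed.

Lemma finish_bound (f n : nat) : (forall e, e \in E -> (#|e| <= f)%N) ->
  ln ((maxdeg E)%:R : R) / ln alpha + f%:R * SB < n%:R -> finished E (S n).
Proof.
move=> hf hlt; apply: finished_of => e eE; apply/negPn/negP => ec.
have hu : uncov (S n) e by rewrite /uncov eE ec.
have a0 : 0 < alpha by apply: lt_trans ha.
have la : 0 < ln alpha by apply: ln_gt0.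
have h1 := life hu.
have h2 : ((rc e n)%:R : R) <= ln ((maxdeg E)%:R : R) / ln alpha.
  rewrite ler_pdivlMr //.
  have hx := rc_bound n eE.
  have xp : 0 < alpha ^+ rc e n by apply: exprn_gt0.
  have Dp : 0 < ((maxdeg E)%:R : R) := lt_le_trans xp hx.
  have hl : ln (alpha ^+ rc e n) <= ln ((maxdeg E)%:R : R) by rewrite ler_ln ?posrE.
  by rewrite lnXn // in hl; rewrite mulr_natl.
have SB0 : 0 <= SB.
  rewrite /SB; apply: addr_ge0 => //; apply: divr_ge0; first by rewrite subr_ge0 ltW.
  by apply: divr_ge0; apply: ltW.
have h3 : \sum_(u in e) ((sc u n)%:R : R) <= f%:R * SB.
  apply: le_trans (_ : \sum_(u in e) SB <= _); first by apply: ler_sum => u _; apply: sc_bound.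
  rewrite sumr_const -[SB *+ _]mulr_natl; apply: ler_wpM2r => //; rewrite ler_nat; exact: hf.
have : (n%:R : R) <= ln ((maxdeg E)%:R : R) / ln alpha + f%:R * SB.
  apply: le_trans (_ : ((rc e n + \sum_(u in e) sc u n)%N)%:R <= _); first by rewrite ler_nat.
  by rewrite natrD natr_sum; apply: lerD.
by rewrite leNgt hlt.
Qed.

End Algo.

Lemma e_lt3 (R : realType) : expR (1 : R) < 3.
Proof.
set y := expR (1 / 10 : R).
have yp : 0 < y := expR_gt0 _.
have h : 9 / 10 <= y^-1.
  have := expR_ge1Dx (- (1 / 10) : R); rewrite expRN -/y; lra.
have hy : y <= 10 / 9.
  have : 9 / 10 * y <= 1.
    rewrite -[leRHS](mulVf (lt0r_neq0 yp)); exact: ler_wpM2r (ltW yp) _ _ h.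
  lra.
have e1 : expR (1 : R) = y ^+ 10.
  by rewrite /y -expRM_natl; congr expR; lra.
have y2 : y ^+ 2 <= 124 / 100 by rewrite expr2; nra.
have y2p : 0 <= y ^+ 2 by apply: exprn_ge0; apply: ltW.
have y4 : (y ^+ 2) ^+ 2 <= 154 / 100 by rewrite expr2; nra.
have y4p : 0 <= (y ^+ 2) ^+ 2 by apply: exprn_ge0.
have y8 : ((y ^+ 2) ^+ 2) ^+ 2 <= 238 / 100 by rewrite expr2; nra.
have y8p : 0 <= ((y ^+ 2) ^+ 2) ^+ 2 by apply: exprn_ge0.
have -> : expR (1 : R) = ((y ^+ 2) ^+ 2) ^+ 2 * y ^+ 2 by rewrite e1 -!exprM -exprD.
have := ler_wpM2r y2p y8; lra.
Qed.

Lemma ln3_gt1 (R : realType) : 1 < ln (3 : R).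
Proof.
have h3 : (0 : R) < 3 by rewrite ltr0n.
by have := e_lt3 R; rewrite -ltr_ln ?posrE ?expR_gt0 // expRK.
Qed.

Lemma ln_half (R : realType) (y : R) : 0 < y -> ln y <= y / 2.
Proof.
move=> yp; set z := expR (ln y / 2).
have zp : 0 < z := expR_gt0 _.
have hz : z * z = y by rewrite /z -expRD -splitr lnK // posrE.
have hl : ln z = ln y / 2 by rewrite /z expRK.
have hle : ln z <= z - 1.
  have e : 1 + (z - 1) = z by lra.
  have := @le_ln1Dx R (z - 1); rewrite e; apply; lra.
have q : 0 <= z * z - 4 * z + 4 by have := sqr_ge0 (z - 2); rewrite expr2; nra.
have ly : ln y = 2 * ln z by rewrite hl; lra.
rewrite ly -hz; lra.
Qed.

Theorem mainTheorem7 (R : realType) (k : nat) :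
  exists c : R, forall (V : finType) (E : {set {set V}}) (w : V -> nat)
    (f : nat) (eps : R),
    (forall e, e \in E -> e != set0 /\ (#|e| <= f)%N) ->
    (3 <= maxdeg E)%N ->
    (* weights and degrees polynomial in n = |V| *)
    (forall v, (w v <= #|V| ^ k)%N) ->
    (maxdeg E <= #|V| ^ k)%N ->
    0 < eps -> eps <= 1 ->
    let beta := eps / (f%:R + eps) in
    let Delta : R := (maxdeg E)%:R in
    let alpha := ln Delta / ln (ln Delta) in
    exists T : nat,
      finished E (stateAt E (fun v => (w v)%:R) beta alpha T) /\
      (rounds T)%:R <= c * ((f%:R ^+ 2 / eps) * (ln Delta / ln (ln Delta))).
Proof.
exists 22 => V E w f eps hE hD _ _ ep e1 beta Delta alpha.
have hD3 : (3 : R) <= Delta by rewrite /Delta (ler_nat R 3).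
have Dp : 0 < Delta by apply: lt_le_trans hD3; rewrite ltr0n.
set L := ln Delta.
have L1 : 1 < L.
  apply: lt_le_trans (ln3_gt1 R) _; rewrite /L ler_ln ?posrE //; by rewrite ltr0n.
have L0 : 0 < L by apply: lt_trans L1.
have lL : 0 < ln L by apply: ln_gt0.
have llL : ln (ln L) <= ln L / 2 := ln_half lL.
have aE : alpha = L / ln L by [].
have a1 : 1 < alpha by rewrite aE ltr_pdivlMr // mul1r; apply: ln_sublinear.
have a0 : 0 < alpha by apply: lt_trans a1.
have lna : ln alpha = ln L - ln (ln L) by rewrite aE ln_div ?posrE.
have lnap : 0 < ln alpha by apply: ln_gt0.
have hL : L / ln alpha <= 2 * alpha.
  rewrite ler_pdivrMr //.
  have aL : alpha * ln L = L by rewrite aE; field; rewrite gt_eqF.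
  have : ln L <= 2 * ln alpha by rewrite lna; lra.
  move=> h; rewrite -[X in X <= _]aL; nra.
have f1 : (1 <= f)%N.
  case: (set_0Vmem E) => [E0|[e eE]].
    move: hD; rewrite /maxdeg big1 // => v _; apply/eqP; rewrite cards_eq0; apply/eqP/setP => e.
    by rewrite !inE E0 inE.
  have [ne cf] := hE e eE; apply: leq_trans cf; by rewrite card_gt0.
have F1 : (1 : R) <= f%:R by rewrite ler1n.
have F0 : (0 : R) < f%:R by apply: lt_le_trans F1.
have b0 : 0 < beta by apply: divr_gt0 => //; apply: addr_gt0.
have b1 : beta < 1 by rewrite /beta ltr_pdivrMr ?mul1r ?ltrDr //; apply: addr_gt0.
have hw : forall v, (0 : R) <= (w v)%:R by move=> v; apply: ler0n.
have hE' : forall e, e \in E -> e != set0 by move=> e /hE [].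
have hf : forall e, e \in E -> (#|e| <= f)%N by move=> e /hE [].
have SBE : SB beta alpha = alpha * f%:R / eps + 1.
  rewrite /SB /beta; congr (_ + _); field.
  by rewrite !gt_eqF //; apply: addr_gt0.
set B := L / ln alpha + f%:R * SB beta alpha.
have B0 : 0 <= B.
  rewrite /B SBE; apply: addr_ge0; first by apply: divr_ge0; apply: ltW.
  apply: mulr_ge0; first exact: ltW.
  apply: addr_ge0 => //; apply: divr_ge0; last exact: ltW.
  by apply: mulr_ge0; apply: ltW.
have /andP [tl tu] := truncn_itv B0.
exists (Num.truncn B).+1; split.
  apply: (finish_bound hw b0 b1 a1 hE' hf); exact: tu.
set Y := f%:R ^+ 2 / eps.
have YF : f%:R <= Y.
  rewrite /Y ler_pdivlMr // expr2.
  apply: le_trans (_ : f%:R * 1 <= _); first by rewrite ler_pM2l // .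
  by rewrite ler_pM2l.
have Y1 : 1 <= Y by apply: le_trans YF.
have fSB : f%:R * SB beta alpha = Y * alpha + f%:R.
  by rewrite SBE /Y; field; rewrite gt_eqF.
rewrite /rounds natrD natrM.
set Z := Y * alpha.
have z1 : alpha <= Z by rewrite /Z ler_peMl //; apply: ltW.
have z2 : f%:R <= Z by apply: le_trans YF _; rewrite /Z ler_peMr //; [apply: le_trans Y1 | apply: ltW].
have hB : B <= 2 * alpha + Z + f%:R by rewrite /B fSB -/Z; lra.
have : ((Num.truncn B).+1%:R : R) <= B + 1 by rewrite -natr1 lerD2r.
rewrite -/Z; lra.
Qed.
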